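(* For any finitely generated group $H$, the set $\mathcal E_H=\{G\in\mathcal G:\ H\text{ is embeddable into }\overline G\}$ is $F_\sigma$ in $\mathcal G$.
   Context: Let $\mathbb N=\{1,2,3,\dots\}$. Equip $\mathbb N^{\mathbb N\times\mathbb N}$ with the product topology of the discrete topology on $\mathbb N$. Let $\mathcal G$ be the subspace consisting of those $A\in\mathbb N^{\mathbb N\times\mathbb N}$ that are the multiplication table of a group on the underlying set $\mathbb N$ whose identity element is $1$. For $G\in\mathcal G$, $\overline G$ denotes the group on $\mathbb N$ with multiplication table $G$. *)

(* Defs.v *)
From HB Require Import structures.
From mathcomp Require Import all_boot all_order.
From mathcomp Require Import all_classical all_reals all_analysis.
Set Implicit Arguments. Unset Strict Implicit. Unset Printing Implicit Defensive.
Local Open Scope classical_set_scope.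

(* Convention: the paper's N = {1,2,3,...} is represented by Rocq's nat via
   the bijection n |-> n-1; so the paper's element 1 is our 0.
   The space N^(N x N) with the product of discrete topologies is
   {ptws nat * nat -> nat} (nat carries the discrete topology in
   mathcomp-analysis, prod_topology is the product topology). *)
Definition Space := {ptws (nat * nat) -> nat}.

Definition is_group_table (A : Space) : Prop :=
  [/\ (forall x y z, A (A (x, y), z) = A (x, A (y, z))),
      (forall x, A (0%N, x) = x /\ A (x, 0%N) = x) &
      (forall x, exists y, A (x, y) = 0%N /\ A (y, x) = 0%N)].

Definition GG : set Space := [set A | is_group_table A].

(* F_sigma subsets of the subspace GG: countable unions of relatively closed
   subsets of GG, i.e. of traces on GG of closed subsets of the ambient space. *)
Definition Fsigma_in (S : set Space) (E : set Space) : Prop :=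
  E `<=` S /\
  exists C : nat -> set Space, (forall n, closed (C n)) /\
    E = S `&` \bigcup_n C n.

Record is_group (H : Type) (mul : H -> H -> H) (e : H) (inv : H -> H) : Prop := {
  grp_assoc : forall x y z, mul (mul x y) z = mul x (mul y z);
  grp_mul1 : forall x, mul e x = x;
  grp_mulV : forall x, mul (inv x) x = e }.

Inductive gen (H : Type) (mul : H -> H -> H) (e : H) (inv : H -> H)
    (n : nat) (s : 'I_n -> H) : H -> Prop :=
  | gen_e : gen mul e inv s e
  | gen_s i : gen mul e inv s (s i)
  | gen_inv x : gen mul e inv s x -> gen mul e inv s (inv x)
  | gen_mul x y : gen mul e inv s x -> gen mul e inv s y ->
                  gen mul e inv s (mul x y).

Definition fin_generated (H : Type) (mul : H -> H -> H) (e : H) (inv : H -> H)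
  : Prop := exists (n : nat) (s : 'I_n -> H), forall x, gen mul e inv s x.

Definition embeds (H : Type) (mul : H -> H -> H) (A : Space) : Prop :=
  exists f : H -> nat, injective f /\
    forall x y, f (mul x y) = A (f x, f y).

Definition EE (H : Type) (mul : H -> H -> H) : set Space :=
  [set A | GG A /\ embeds mul A].

(* Main.v *)
Require Import Defs.
From mathcomp Require Import all_boot all_order.
From mathcomp Require Import all_classical all_reals all_analysis.
From mathcomp Require Import zify.
Local Open Scope classical_set_scope.

Lemma proj_near (A : Space) (p : nat * nat) : \forall B \near A, B p = A p.
Proof.
have : {ptws, nbhs A --> A} by [].
move/(pointwise_cvgP _ _)=> /(_ p).
move/(discrete_cvg _ _) => h.
exact: h.
Qed.

Definition locconst (g : Space -> nat) := forall A, \forall B \near A, g B = g A.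

Definition evalA (t : seq nat) (A : Space) (w : seq nat) : nat :=
  foldr (fun j acc => A (nth 0%N t j, acc)) 0%N w.

Lemma evalA_loc t w : locconst (fun A => evalA t A w).
Proof.
elim: w => [|j w IH] A /=; first by near=> B.
near=> B.
rewrite (near (IH A) B) //.
rewrite (near (proj_near A (nth 0%N t j, evalA t A w)) B) //.
Unshelve. all: by end_near.
Qed.

Lemma open_rel (g1 g2 : Space -> nat) (Q : nat -> nat -> Prop) :
  locconst g1 -> locconst g2 -> open [set A | Q (g1 A) (g2 A)].
Proof.
move=> h1 h2; rewrite openE => A /= HQ.
rewrite /interior.
near=> B.
rewrite /= (near (h1 A) B) // (near (h2 A) B) //.
Unshelve. all: by end_near.
Qed.

Lemma closed_rel (g1 g2 : Space -> nat) (Q : nat -> nat -> Prop) :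
  locconst g1 -> locconst g2 -> closed [set A | Q (g1 A) (g2 A)].
Proof.
move=> h1 h2.
have -> : [set A | Q (g1 A) (g2 A)] = ~` [set A | ~ Q (g1 A) (g2 A)].
  by apply/seteqP; split => A /=; [move=> q nq|move=> /boolp.contrapT].
exact: (open_closedC (open_rel g1 g2 (fun a b => ~ Q a b) h1 h2)).
Qed.

Section Grp.
Variables (H : Type) (mul : H -> H -> H) (e : H) (inv : H -> H).
Hypothesis G : is_group mul e inv.

Lemma mulgV x : mul x (inv x) = e.
Proof.
case: G => A L V.
rewrite -(L (mul x (inv x))) -{1}(V (inv x)) A -(A (inv x) x (inv x)) V L V //.
Qed.

Lemma mulg1 x : mul x e = x.
Proof. case: G => A L V. by rewrite -(V x) -A mulgV L. Qed.

Lemma mulIg a b x : mul a x = mul b x -> a = b.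
Proof.
case: G => A L V => h.
by rewrite -(mulg1 a) -(mulgV x) -A h A mulgV mulg1.
Qed.

Lemma invgK x : inv (inv x) = x.
Proof. case: G => A L V. apply: (@mulIg _ _ (inv x)). by rewrite V mulgV. Qed.

Lemma invMg x y : inv (mul x y) = mul (inv y) (inv x).
Proof.
case: G => A L V. apply: (@mulIg _ _ (mul x y)).
by rewrite V A -(A (inv x)) V L V.
Qed.

Variables (n : nat) (s : 'I_n -> H).

Definition sH (j : nat) : H :=
  match (insub j : option 'I_n) with
  | Some i => s i
  | None => match (insub (j - n) : option 'I_n) with
            | Some i => inv (s i) | None => e end end.

Definition evalH (w : seq nat) : H := foldr (fun j acc => mul (sH j) acc) e w.

Lemma evalH_cat w1 w2 : evalH (w1 ++ w2) = mul (evalH w1) (evalH w2).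
Proof.
case: G => A L V.
elim: w1 => [|j w IH] /=; first by rewrite L.
by rewrite IH A.
Qed.

Lemma sH_ord (i : 'I_n) : sH i = s i.
Proof. by rewrite /sH valK. Qed.

Lemma sH_ordn (i : 'I_n) : sH (i + n) = inv (s i).
Proof.
rewrite /sH insubF; last by rewrite ltnNge leq_addl.
by rewrite addnK valK.
Qed.

Lemma sH_big j : (n + n <= j)%N -> sH j = e.
Proof.
move=> hj; rewrite /sH insubF; last by apply/negbTE; rewrite -leqNgt; lia.
by rewrite insubF //; apply/negbTE; rewrite -leqNgt; lia.
Qed.

Lemma gen_words h : gen mul e inv s h ->
  (exists w, evalH w = h) /\ (exists w, evalH w = inv h).
Proof.
case: (G) => A L V.
elim=> [|i|x _ [[w1 h1] [w2 h2]]|x y _ [[w1 h1] [w2 h2]] _ [[w3 h3] [w4 h4]]].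
- split; exists [::] => //=. by rewrite -{1}(mulgV e) L.
- split; [exists [:: val i]|exists [:: (val i + n)%N]]; rewrite /= mulg1.
    by rewrite sH_ord. by rewrite sH_ordn.
- split; [exists w2 => //|exists w1; by rewrite invgK].
- split; [exists (w1 ++ w3)|exists (w4 ++ w2)]; rewrite evalH_cat; [by rewrite h1 h3|by rewrite h4 h2 invMg].
Qed.

End Grp.

Lemma evalA_cat t (A : Space) w1 w2 : GG A ->
  evalA t A (w1 ++ w2) = A (evalA t A w1, evalA t A w2).
Proof.
case=> As Ai _.
elim: w1 => [|j w IH] /=; first by case: (Ai (evalA t A w2)).
by rewrite IH As.
Qed.

Lemma hom_e H (mul : H -> H -> H) e (inv : H -> H) (A : Space) (f : H -> nat) :
  is_group mul e inv -> GG A -> (forall x y, f (mul x y) = A (f x, f y)) -> f e = 0%N.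
Proof.
case=> _ L _ [As Ai Av] hf.
have ee : A (f e, f e) = f e by rewrite -hf L.
case: (Av (f e)) => y [h1 _].
have : A (A (f e, f e), y) = A (f e, A (f e, y)) by rewrite As.
by rewrite ee h1; case: (Ai (f e)) => _ ->.
Qed.

Definition CC (n : nat) (Hw : seq nat -> seq nat -> Prop) (t : seq nat) : set Space :=
  [set A | forall w1 w2, Hw w1 w2 <-> evalA t A w1 = evalA t A w2].

Theorem lemma7p4 (H : Type) (mul : H -> H -> H) (e : H) (inv : H -> H) :
  is_group mul e inv -> fin_generated mul e inv ->
  Fsigma_in GG (EE mul).
Proof.
move=> G [n [s gs]].
pose ev := @evalH _ mul e inv _ s.
pose Hw := fun w1 w2 => ev w1 = ev w2.
pose C := fun k : nat => CC n Hw (odflt [::] (unpickle k)).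
split; first by move=> A [].
exists C; split.
  move=> k.
  have -> : C k = \bigcap_(p in [set: seq nat * seq nat])
     [set A | (fun a b => Hw p.1 p.2 <-> a = b) (evalA (odflt [::] (unpickle k)) A p.1)
                                          (evalA (odflt [::] (unpickle k)) A p.2)].
    apply/seteqP; split => A /=.
      by move=> h [w1 w2] _; apply: h.
    by move=> h w1 w2; apply: (h (w1, w2)).
  apply: (@closed_bigI Space) => p _.
  exact: (closed_rel (fun A => evalA _ A p.1) (fun A => evalA _ A p.2) (fun a b => Hw p.1 p.2 <-> a = b) (evalA_loc _ p.1) (evalA_loc _ p.2)).
have words h : exists w, ev w = h by case: (@gen_words _ mul e inv G _ s h (gs h)).
apply/seteqP; split => A.
  move=> [GA [f [fi fh]]]; split => //.
  have fe := @hom_e _ _ _ _ _ _ G GA fh.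
  pose t := mkseq (fun j => f (@sH _ e inv _ s j)) (n + n).
  have tE j : nth 0%N t j = f (@sH _ e inv _ s j).
    case: (ltnP j (n + n)) => hj; first by rewrite nth_mkseq.
    by rewrite nth_default ?size_mkseq // (@sH_big _ e inv _ s).
  have evE w : evalA t A w = f (ev w).
    elim: w => [|j w IH] /=; first by rewrite fe.
    by rewrite tE IH -fh.
  exists (pickle t) => //; rewrite /C /CC; have -> : odflt [::] (unpickle (pickle t)) = t by rewrite pickleK.
  move=> w1 w2.
  rewrite !evE /Hw; split; [by move->|exact: fi].
move=> [GA [k _ Ck]]; split => //.
move: Ck; rewrite /C /CC; move: (odflt _ _) => t Ck.
have [W WE] := boolp.choice words.
exists (fun h => evalA t A (W h)); split.
  by move=> x y /Ck; rewrite /Hw !WE.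
move=> x y; rewrite -evalA_cat //.
apply/Ck; rewrite /Hw WE /ev (@evalH_cat _ mul e inv G) -/ev !WE //.
Qed.
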